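(* Given a c.e. transitive relation $\prec$ on $\omega$ and a c.e. set $U\subseteq\omega$, one can effectively obtain (uniformly in indices for $\prec$ and $U$) a c.e. transitive relation $\sqsubset$ on $\omega$ such that $\mathcal{I}(\sqsubset)$ is computably homeomorphic to the effective space obtained from $\mathcal{I}(\prec)$ by adding the set $A=\{I\in\mathcal{I}(\prec)\mid (\forall x\in U)\, x\notin I\}$ as a c.e. open set to its topology.
   Context: For a transitive relation $\prec$ on $\omega$, an ideal is a non-empty set $I\subseteq\omega$ which is a lower set ($b\prec a\in I\Rightarrow b\in I$) and directed (for $a,b\in I$ there is $c\in I$ with $a\prec c$, $b\prec c$). $\mathcal{I}(\prec)$ is the space of all ideals with topology generated by $[n]_\prec=\{I\mid n\in I\}$, an effective space with base numbering $n\mapsto[n]_\prec$. Adding $A$ as a c.e. open set means taking the topology generated by the sets $[n]_\prec$ together with $A$, with the effective base consisting of the sets $[n]_\prec$ and $A\cap[n]_\prec$. Effective spaces are countably based $T_0$ spaces with a numbered base whose pairwise intersections are uniformly c.e. unions of basic sets; a map is computable if preimages of basic open sets are uniformly c.e. unions of basic open sets, and a computable homeomorphism is a homeomorphism computable in both directions. *)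

(* Defs.v *)
From Stdlib Require Import Arith Cantor.

Definition pair (a b : nat) : nat := Cantor.to_nat (a, b).
Definition unpair (n : nat) : nat * nat := Cantor.of_nat n.

(* Partial recursive functions nat -> nat (unary, tuples coded by pairing).
   A natural number c is read as a program via unpair c = (tag, rest):
     tag 0 : constant 0            tag 1 : successor
     tag 2 : first component       tag 3 : second component
     tag 4 : rest = <f,g>, x |-> pair (f x) (g x)
     tag 5 : rest = <f,g>, x |-> f (g x)
     tag 6 : rest = <f,g>, primitive recursion on pair a n:
             h(a,0) = f a,  h(a,m+1) = g (pair a (pair m (h(a,m))))
     tag 7 : rest = f, minimisation: x |-> least i with f (pair x i) = 0
             (all f (pair x j), j < i, defined)
     other : identity. *)
Fixpoint eval (fuel : nat) (c : nat) (x : nat) {struct fuel} : option nat :=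
  match fuel with
  | 0 => None
  | S fl =>
    let (tag, rest) := unpair c in
    match tag with
    | 0 => Some 0
    | 1 => Some (S x)
    | 2 => Some (fst (unpair x))
    | 3 => Some (snd (unpair x))
    | 4 => let (f, g) := unpair rest in
           match eval fl f x, eval fl g x with
           | Some u, Some v => Some (pair u v)
           | _, _ => None
           end
    | 5 => let (f, g) := unpair rest in
           match eval fl g x with
           | Some v => eval fl f v
           | None => None
           end
    | 6 => let (f, g) := unpair rest in
           let (a, n) := unpair x in
           (fix rec (m : nat) : option nat :=
              match m with
              | 0 => eval fl f a
              | S m' => match rec m' with
                        | Some r => eval fl g (pair a (pair m' r))
                        | None => None
                        end
              end) n
    | 7 => (fix search (i k : nat) {struct k} : option nat :=
              match k with
              | 0 => None
              | S k' => match eval fl rest (pair x i) with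
                        | Some 0 => Some i
                        | Some _ => search (S i) k'
                        | None => None
                        end
              end) 0 fl
    | _ => Some x
    end
  end.

Definition phi (e x y : nat) : Prop := exists fuel, eval fuel e x = Some y.

Definition W (e x : nat) : Prop := exists y, phi e x y.

Definition computable2 (t : nat -> nat -> nat) : Prop :=
  exists h, forall a b, phi h (pair a b) (t a b).

Definition ce_rel (e : nat) (a b : nat) : Prop := W e (pair a b).

Definition transitive (R : nat -> nat -> Prop) : Prop :=
  forall a b c, R a b -> R b c -> R a c.

Definition is_ideal (R : nat -> nat -> Prop) (I : nat -> Prop) : Prop :=
  (exists n, I n) /\
  (forall a b, R b a -> I a -> I b) /\
  (forall a b, I a -> I b -> exists c, I c /\ R a c /\ R b c).

Definition ideals (R : nat -> nat -> Prop) : Type := {I : nat -> Prop | is_ideal R I}.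

Definition ideal_base (R : nat -> nat -> Prop) (n : nat) (I : ideals R) : Prop :=
  proj1_sig I n.

Definition add_open_base {X : Type} (base : nat -> X -> Prop) (A : X -> Prop)
    (n : nat) (x : X) : Prop :=
  if Nat.even n then base (Nat.div2 n) x else A x /\ base (Nat.div2 n) x.

Definition computable_map {X Y : Type} (beta : nat -> X -> Prop)
    (gamma : nat -> Y -> Prop) (f : X -> Y) : Prop :=
  exists e, forall n x, gamma n (f x) <-> exists k, W e (pair n k) /\ beta k x.

Definition comp_homeomorphic {X Y : Type} (beta : nat -> X -> Prop)
    (gamma : nat -> Y -> Prop) : Prop :=
  exists (f : X -> Y) (g : Y -> X),
    (forall x, g (f x) = x) /\ (forall y, f (g y) = y) /\
    computable_map beta gamma f /\ computable_map gamma beta g.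

(* Main.v *)
Require Import Defs.
From Stdlib Require Import Arith Lia List Cantor Classical ProofIrrelevance FunctionalExtensionality PropExtensionality.
Import ListNotations.

Lemma unpair_pair a b : unpair (pair a b) = (a,b).
Proof. unfold unpair, pair. apply cancel_of_to. Qed.

Fixpoint recF (ev : nat -> nat -> option nat) (f g a m : nat) : option nat :=
  match m with
  | 0 => ev f a
  | S m' => match recF ev f g a m' with
            | Some r => ev g (pair a (pair m' r))
            | None => None end
  end.

Fixpoint srchF (ev : nat -> nat -> option nat) (rest x i k : nat) : option nat :=
  match k with
  | 0 => None
  | S k' => match ev rest (pair x i) with
            | Some 0 => Some i
            | Some _ => srchF ev rest x (S i) k'
            | None => None end
  end.

Lemma eval_S fl c x : eval (S fl) c x =
  let (tag, rest) := unpair c in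
    match tag with
    | 0 => Some 0
    | 1 => Some (S x)
    | 2 => Some (fst (unpair x))
    | 3 => Some (snd (unpair x))
    | 4 => let (f, g) := unpair rest in
           match eval fl f x, eval fl g x with
           | Some u, Some v => Some (pair u v)
           | _, _ => None
           end
    | 5 => let (f, g) := unpair rest in
           match eval fl g x with
           | Some v => eval fl f v
           | None => None
           end
    | 6 => let (f, g) := unpair rest in
           let (a, n) := unpair x in recF (eval fl) f g a n
    | 7 => srchF (eval fl) rest x 0 fl
    | _ => Some x
    end.
Proof.
  cbn [eval]. destruct (unpair c) as [tag rest].
  destruct tag as [|[|[|[|[|[|[|[|tag]]]]]]]]; try reflexivity.
  - destruct (unpair rest) as [f g]. destruct (unpair x) as [a n].
    match goal with |- ?F n = _ => assert (H: forall m, F m = recF (eval fl) f g a m) end.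
    { induction m; simpl; [reflexivity|]. rewrite IHm. reflexivity. }
    apply H.
  - match goal with |- ?F 0 fl = _ => assert (H: forall k i, F i k = srchF (eval fl) rest x i k) end.
    { induction k; intros i; simpl; [reflexivity|].
      destruct (eval fl rest (pair x i)) as [[|v]|]; auto. }
    apply H.
Qed.

Definition evle (ev ev' : nat -> nat -> option nat) :=
  forall c x y, ev c x = Some y -> ev' c x = Some y.

Lemma recF_mono ev ev' f g a m y : evle ev ev' ->
  recF ev f g a m = Some y -> recF ev' f g a m = Some y.
Proof.
  intros H. revert y. induction m; simpl; intros y E; auto.
  destruct (recF ev f g a m) eqn:E1; [|discriminate].
  rewrite (IHm n eq_refl). auto.
Qed.

Lemma srchF_mono ev ev' r x y : evle ev ev' -> forall k i k', k <= k' ->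
  srchF ev r x i k = Some y -> srchF ev' r x i k' = Some y.
Proof.
  intros H. induction k; intros i k' Hk E; simpl in E; [discriminate|].
  destruct k' as [|k']; [lia|]. simpl.
  destruct (ev r (pair x i)) as [[|v]|] eqn:E1; try discriminate.
  - rewrite (H _ _ _ E1). auto.
  - rewrite (H _ _ _ E1). apply IHk; auto; lia.
Qed.

Lemma eval_mono1 fl : evle (eval fl) (eval (S fl)).
Proof.
  induction fl; intros c x y E; [discriminate|].
  rewrite eval_S in E |- *.
  destruct (unpair c) as [tag rest].
  destruct tag as [|[|[|[|[|[|[|[|tag]]]]]]]]; auto.
  - destruct (unpair rest) as [f g].
    destruct (eval fl f x) eqn:E1; [|discriminate].
    destruct (eval fl g x) eqn:E2; [|discriminate].
    rewrite (IHfl _ _ _ E1), (IHfl _ _ _ E2). auto.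
  - destruct (unpair rest) as [f g].
    destruct (eval fl g x) eqn:E1; [|discriminate].
    rewrite (IHfl _ _ _ E1). auto.
  - destruct (unpair rest) as [f g]. destruct (unpair x) as [a n].
    eapply recF_mono; eauto.
  - eapply srchF_mono; [eauto| |eauto]; lia.
Qed.

Lemma eval_mono fl fl' c x y : fl <= fl' -> eval fl c x = Some y -> eval fl' c x = Some y.
Proof.
  induction 1; auto. intros E. apply eval_mono1. auto.
Qed.

Lemma eval_det fl fl' c x y y' : eval fl c x = Some y -> eval fl' c x = Some y' -> y = y'.
Proof.
  intros E1 E2. destruct (Nat.le_ge_cases fl fl').
  - rewrite (eval_mono _ _ _ _ _ H E1) in E2. congruence.
  - rewrite (eval_mono _ _ _ _ _ H E2) in E1. congruence.
Qed.

Definition evs c x y := exists fl0, forall fl, fl0 <= fl -> eval fl c x = Some y.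

Lemma phi_evs c x y : phi c x y <-> evs c x y.
Proof.
  split.
  - intros [fl E]. exists fl. intros. eapply eval_mono; eauto.
  - intros [fl0 H]. exists fl0. apply H. lia.
Qed.

Inductive tm := TZ | TS | TF | TSn | TId | TPr (a b : tm) | TCm (a b : tm) | TRc (a b : tm).

Fixpoint cc (t : tm) : nat :=
  match t with
  | TZ => pair 0 0 | TS => pair 1 0 | TF => pair 2 0 | TSn => pair 3 0 | TId => pair 8 0
  | TPr a b => pair 4 (pair (cc a) (cc b))
  | TCm a b => pair 5 (pair (cc a) (cc b))
  | TRc a b => pair 6 (pair (cc a) (cc b))
  end.

Definition rec_den (F : nat -> nat) (G : nat -> nat) (a n : nat) : nat :=
  nat_rect (fun _ => nat) (F a) (fun m r => G (pair a (pair m r))) n.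

Fixpoint den (t : tm) (x : nat) : nat :=
  match t with
  | TZ => 0 | TS => S x | TF => fst (unpair x) | TSn => snd (unpair x) | TId => x
  | TPr a b => pair (den a x) (den b x)
  | TCm a b => den a (den b x)
  | TRc a b => rec_den (den a) (den b) (fst (unpair x)) (snd (unpair x))
  end.

Lemma evs_base c x y fl : (forall fl', eval (S (fl + fl')) c x = Some y) -> evs c x y.
Proof.
  intros H. exists (S fl). intros fl' Hl. replace fl' with (S (fl + (fl' - S fl))) by lia. apply H.
Qed.

Theorem cc_ok t : forall x, evs (cc t) x (den t x).
Proof.
  induction t; intros x; simpl.
  1-5: exists 1; intros fl Hl; destruct fl; [lia|]; rewrite eval_S, unpair_pair; reflexivity.
  - destruct (IHt1 x) as [f1 H1]. destruct (IHt2 x) as [f2 H2].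
    exists (S (f1 + f2)). intros fl Hl. destruct fl; [lia|].
    rewrite eval_S, !unpair_pair. rewrite H1, H2 by lia. reflexivity.
  - destruct (IHt2 x) as [f2 H2]. destruct (IHt1 (den t2 x)) as [f1 H1].
    exists (S (f1 + f2)). intros fl Hl. destruct fl; [lia|].
    rewrite eval_S, !unpair_pair. rewrite H2 by lia. apply H1. lia.
  - destruct (unpair x) as [a n] eqn:Ex. simpl.
    assert (R: forall m, exists f0, forall fl, f0 <= fl ->
       recF (eval fl) (cc t1) (cc t2) a m = Some (rec_den (den t1) (den t2) a m)).
    { induction m.
      - destruct (IHt1 a) as [f1 H1]. exists f1. intros. simpl. auto.
      - destruct IHm as [f0 H0].
        destruct (IHt2 (pair a (pair m (rec_den (den t1) (den t2) a m)))) as [f1 H1].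
        exists (f0 + f1). intros fl Hl. simpl. rewrite H0 by lia. apply H1. lia. }
    destruct (R n) as [f0 H0]. exists (S f0). intros fl Hl. destruct fl; [lia|].
    rewrite eval_S, !unpair_pair, Ex. apply H0. lia.
Qed.

Lemma cc_phi t x : phi (cc t) x (den t x).
Proof. apply phi_evs, cc_ok. Qed.

Lemma srchF_sound ev r x i k y : srchF ev r x i k = Some y -> ev r (pair x y) = Some 0.
Proof.
  revert i. induction k; intros i E; simpl in E; [discriminate|].
  destruct (ev r (pair x i)) as [[|v]|] eqn:E1; try discriminate.
  - congruence.
  - eauto.
Qed.

Lemma srchF_complete ev r x (D : nat -> nat) :
  (forall j, ev r (pair x j) = Some (D j)) ->
  forall k i, (exists j, i <= j < i + k /\ D j = 0) -> exists y, srchF ev r x i k = Some y.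
Proof.
  intros H. induction k; intros i [j [Hj Dj]]; [lia|]. simpl. rewrite H.
  destruct (D i) eqn:Di; eauto.
  apply IHk. exists j. split; auto.
  destruct (Nat.eq_dec i j); subst; [congruence|lia].
Qed.

Definition mu (t : tm) : nat := pair 7 (cc t).

Lemma W_mu t x : W (mu t) x <-> exists i, den t (pair x i) = 0.
Proof.
  split.
  - intros [y [fl E]]. destruct fl; [discriminate|].
    unfold mu in E. rewrite eval_S, unpair_pair in E.
    apply srchF_sound in E. exists y.
    destruct (cc_ok t (pair x y)) as [f0 H0].
    symmetry. apply (eval_det _ _ _ _ _ _ E (H0 (f0) (le_n _))).
  - intros [i Hi].
    assert (U: forall N, exists f0, forall fl, f0 <= fl -> forall j, j < N ->
               eval fl (cc t) (pair x j) = Some (den t (pair x j))).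
    { induction N. - exists 0. intros; lia.
      - destruct IHN as [f0 H0]. destruct (cc_ok t (pair x N)) as [f1 H1].
        exists (f0 + f1). intros fl Hl j Hj.
        destruct (Nat.eq_dec j N); [subst; apply H1; lia|]. apply H0; lia. }
    destruct (U (S i)) as [f0 H0].
    set (fl := f0 + S i).
    assert (exists y, srchF (eval fl) (cc t) x 0 fl = Some y) as [y Hy].
    { clear -H0 Hi. 
      assert (G: forall k j, j + k <= S i -> (exists j', j <= j' < j + k /\ den t (pair x j') = 0) ->
                 exists y, srchF (eval fl) (cc t) x j k = Some y).
      { induction k; intros j Hjk [j' [Hj' Dj]]; [lia|]. simpl.
        rewrite (H0 fl ltac:(unfold fl; lia) j ltac:(lia)).
        destruct (den t (pair x j)) eqn:Dj0; eauto.
        apply IHk; [lia|]. exists j'. split; auto.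
        destruct (Nat.eq_dec j j'); subst; [congruence|lia]. }
      destruct (G (S i) 0 ltac:(lia) ltac:(exists i; split; [lia|auto])) as [y Hy].
      exists y. eapply srchF_mono with (k := S i); [intros ? ? ? E; exact E| unfold fl; lia | exact Hy]. }
    exists y, (S fl). unfold mu. rewrite eval_S, unpair_pair. exact Hy.
Qed.

Arguments pair : simpl never.
Arguments unpair : simpl never.

Lemma fst_up a b : fst (unpair (pair a b)) = a.
Proof. rewrite unpair_pair. reflexivity. Qed.
Lemma snd_up a b : snd (unpair (pair a b)) = b.
Proof. rewrite unpair_pair. reflexivity. Qed.
Hint Rewrite fst_up snd_up : up.

Fixpoint K (n : nat) : tm := match n with 0 => TZ | S n => TCm TS (K n) end.
Lemma den_K n x : den (K n) x = n.
Proof. induction n; simpl; auto. Qed.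

Definition fs (t : tm) := TCm TF t.
Definition sn (t : tm) := TCm TSn t.
Lemma den_fs t x : den (fs t) x = fst (unpair (den t x)). Proof. reflexivity. Qed.
Lemma den_sn t x : den (sn t) x = snd (unpair (den t x)). Proof. reflexivity. Qed.

Definition ifz (c f g : tm) : tm := TCm (TRc f (TCm g TF)) (TPr TId c).
Lemma den_ifz c f g x : den (ifz c f g) x = match den c x with 0 => den f x | S _ => den g x end.
Proof.
  simpl. autorewrite with up. unfold rec_den. destruct (den c x); simpl; autorewrite with up; auto.
Qed.

Definition op2 (O a b : tm) := TCm O (TPr a b).
Lemma den_op2 O a b x : den (op2 O a b) x = den O (pair (den a x) (den b x)).
Proof. reflexivity. Qed.

Definition PRED := TCm (TRc TZ (TCm TF TSn)) (TPr TZ TId).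
Lemma den_PRED x : den PRED x = Nat.pred x.
Proof. simpl. autorewrite with up. unfold rec_den. destruct x; simpl; autorewrite with up; auto. Qed.

Definition SUB := TRc TId (TCm PRED (TCm TSn TSn)).
Lemma den_SUB a b : den SUB (pair a b) = a - b.
Proof.
  unfold SUB. cbn [den]. autorewrite with up. unfold rec_den. induction b; cbn [nat_rect]; [lia|].
  cbn [den]. rewrite den_PRED. autorewrite with up. rewrite IHb. lia.
Qed.

Definition ADD := TRc TId (TCm TS (TCm TSn TSn)).
Lemma den_ADD a b : den ADD (pair a b) = a + b.
Proof.
  simpl. autorewrite with up. unfold rec_den. induction b; simpl; [lia|].
  autorewrite with up. rewrite IHb. lia.
Qed.

Definition andz a b := op2 ADD a b.
Lemma den_andz a b x : den (andz a b) x = den a x + den b x.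
Proof. unfold andz. rewrite den_op2, den_ADD. auto. Qed.

Definition b2 (b : bool) : nat := if b then 0 else 1.

Definition EQB a b := ifz (andz (op2 SUB a b) (op2 SUB b a)) (K 0) (K 1).
Lemma den_EQB a b x : den (EQB a b) x = b2 (den a x =? den b x).
Proof.
  unfold EQB. rewrite den_ifz, den_andz, !den_op2, !den_SUB, !den_K.
  destruct (den a x =? den b x) eqn:E; [apply Nat.eqb_eq in E|apply Nat.eqb_neq in E]; unfold b2.
  - rewrite E. replace (den b x - den b x + (den b x - den b x)) with 0 by lia. auto.
  - destruct (den a x - den b x + (den b x - den a x)) eqn:E2; auto. lia.
Qed.

Definition LTB a b := ifz (op2 SUB (TCm TS a) b) (K 0) (K 1).
Lemma den_LTB a b x : den (LTB a b) x = b2 (den a x <? den b x).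
Proof.
  unfold LTB. rewrite den_ifz, den_op2, den_SUB, !den_K. cbn [den].
  destruct (den a x <? den b x) eqn:E; [apply Nat.ltb_lt in E|apply Nat.ltb_ge in E]; unfold b2.
  - destruct (S (den a x) - den b x) eqn:E2; auto; lia.
  - destruct (S (den a x) - den b x) eqn:E2; auto; lia.
Qed.

Definition notz a := ifz a (K 1) (K 0).
Lemma den_notz a x : den (notz a) x = match den a x with 0 => 1 | S _ => 0 end.
Proof. unfold notz. rewrite den_ifz, !den_K. auto. Qed.

Definition loop (init G cnt : tm) := TCm (TRc init G) (TPr TId cnt).
Lemma den_loop init G cnt x : den (loop init G cnt) x = rec_den (den init) (den G) x (den cnt x).
Proof. simpl. autorewrite with up. auto. Qed.

Definition gE := TF.
Definition gM := TCm TF TSn.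
Definition gR := TCm TSn TSn.
Lemma rec_den_S F G a m : rec_den F G a (S m) = G (pair a (pair m (rec_den F G a m))).
Proof. reflexivity. Qed.

Definition ball (P cnt : tm) := loop TZ (op2 ADD gR (TCm P (TPr gE gM))) cnt.
Lemma den_ball P cnt x : den (ball P cnt) x = 0 <-> forall m, m < den cnt x -> den P (pair x m) = 0.
Proof.
  unfold ball. rewrite den_loop. generalize (den cnt x) as N. induction N.
  - simpl. split; intros; auto; lia.
  - rewrite rec_den_S. rewrite den_op2, den_ADD. cbn [den gR gE gM]. autorewrite with up.
    set (r := rec_den _ _ x N) in *. split.
    + intros H m Hm.
      destruct (Nat.eq_dec m N); [subst; lia|]. apply IHN; [lia|]. lia.
    + intros H. rewrite (proj2 IHN) by (intros; apply H; lia). rewrite H by lia. auto.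
Qed.

Definition bex (P cnt : tm) := loop (K 1) (ifz gR (K 0) (TCm P (TPr gE gM))) cnt.
Lemma den_bex P cnt x : den (bex P cnt) x = 0 <-> exists m, m < den cnt x /\ den P (pair x m) = 0.
Proof.
  unfold bex. rewrite den_loop. generalize (den cnt x) as N. induction N.
  - cbn [rec_den nat_rect]. rewrite den_K. split; [discriminate|intros [m [Hm _]]; lia].
  - rewrite rec_den_S, den_ifz. cbn [den gR gE gM]. autorewrite with up.
    set (r := rec_den _ _ x N) in *.
    destruct r eqn:E.
    + rewrite den_K. split; auto. intros _. destruct (proj1 IHN eq_refl) as [m [Hm Pm]]. exists m; split; auto.
    + split.
      * intros H. exists N. split; auto.
      * intros [m [Hm Pm]]. destruct (Nat.eq_dec m N); [subst; auto|].
        assert (S n = 0) by (apply IHN; exists m; split; auto; lia). discriminate.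
Qed.

Definition snd' z := snd (unpair z).
Definition DROP := TRc TId (TCm TSn (TCm TSn TSn)).
Lemma den_DROP b m : den DROP (pair b m) = Nat.iter m snd' b.
Proof.
  simpl. autorewrite with up. unfold rec_den. induction m; simpl; auto.
  autorewrite with up. rewrite IHm. reflexivity.
Qed.

Fixpoint dec (n b : nat) : list nat :=
  match n with 0 => [] | S n' => fst (unpair b) :: dec n' (snd (unpair b)) end.

Lemma nth_dec n b m : m < n -> nth m (dec n b) 0 = fst (unpair (Nat.iter m snd' b)).
Proof.
  revert b m. induction n; intros b m Hm; [lia|]. destruct m; simpl; auto.
  rewrite IHn by lia. change (snd' (Nat.iter m snd' b)) with (Nat.iter (S m) snd' b).
  rewrite Nat.iter_succ_r. reflexivity.
Qed.

Lemma dec_length n b : length (dec n b) = n.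
Proof. revert b; induction n; simpl; auto. Qed.

Lemma skipn_dec n b m : m <= n -> skipn m (dec n b) = dec (n - m) (Nat.iter m snd' b).
Proof.
  revert b m. induction n; intros b m Hm.
  - destruct m; [auto|lia].
  - destruct m; simpl; auto. rewrite IHn by lia. f_equal.
    change (snd' (Nat.iter m snd' b)) with (Nat.iter (S m) snd' b).
    rewrite Nat.iter_succ_r. reflexivity.
Qed.

Fixpoint enc (l : list nat) : nat := match l with [] => 0 | a :: l => pair a (enc l) end.
Lemma dec_enc l : dec (length l) (enc l) = l.
Proof. induction l; simpl; auto. autorewrite with up. rewrite IHl. auto. Qed.

Definition ELT (b m : tm) := fs (op2 DROP b m).
Lemma den_ELT b m x : den (ELT b m) x = fst (unpair (Nat.iter (den m x) snd' (den b x))).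
Proof. unfold ELT. rewrite den_fs, den_op2, den_DROP. auto. Qed.

Lemma in_dec_iff n b (Q : nat -> Prop) :
  (exists m, m < n /\ Q (fst (unpair (Nat.iter m snd' b)))) <-> exists y, In y (dec n b) /\ Q y.
Proof.
  split.
  - intros [m [Hm Qm]]. exists (nth m (dec n b) 0). rewrite nth_dec by auto. split; auto.
    rewrite <- nth_dec with (n := n) by auto. apply nth_In. rewrite dec_length; auto.
  - intros [y [Hy Qy]]. apply (In_nth _ _ 0) in Hy. destruct Hy as [m [Hm E]].
    rewrite dec_length in Hm. exists m. split; auto. rewrite <- nth_dec with (n := n) by auto. congruence.
Qed.

Lemma all_dec_iff n b (Q : nat -> Prop) :
  (forall m, m < n -> Q (fst (unpair (Nat.iter m snd' b)))) <-> forall y, In y (dec n b) -> Q y.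
Proof.
  split.
  - intros H y Hy. apply (In_nth _ _ 0) in Hy. destruct Hy as [m [Hm E]].
    rewrite dec_length in Hm. subst. rewrite nth_dec by auto. auto.
  - intros H m Hm. rewrite <- nth_dec with (n := n) by auto. apply H. apply nth_In. rewrite dec_length; auto.
Qed.

Lemma pair_unpair n : pair (fst (unpair n)) (snd (unpair n)) = n.
Proof. unfold pair, unpair. rewrite <- surjective_pairing. apply cancel_to_of. Qed.

Lemma eval_S' fl c x : eval (S fl) c x =
  match fst (unpair c) with
  | 0 => Some 0 | 1 => Some (S x) | 2 => Some (fst (unpair x)) | 3 => Some (snd (unpair x))
  | 4 => match eval fl (fst (unpair (snd (unpair c)))) x, eval fl (snd (unpair (snd (unpair c)))) x with
         | Some u, Some v => Some (pair u v) | _, _ => None end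
  | 5 => match eval fl (snd (unpair (snd (unpair c)))) x with
         | Some v => eval fl (fst (unpair (snd (unpair c)))) v | None => None end
  | 6 => recF (eval fl) (fst (unpair (snd (unpair c)))) (snd (unpair (snd (unpair c)))) (fst (unpair x)) (snd (unpair x))
  | 7 => srchF (eval fl) (snd (unpair c)) x 0 fl
  | _ => Some x end.
Proof.
  rewrite eval_S. destruct (unpair c) as [t r]. cbn [fst snd]. destruct (unpair r) as [f g].
  destruct (unpair x) as [a n]. cbn [fst snd]. reflexivity.
Qed.

Definition jE c x y := pair 0 (pair c (pair x y)).
Definition jS f x i r := pair 1 (pair f (pair x (pair i r))).

Definition okJ (j h : nat) (P : nat -> Prop) : Prop :=
 let d := snd (unpair j) in
 match fst (unpair j) with
 | 0 => let c := fst (unpair d) in let x := fst (unpair (snd (unpair d))) in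
        let y := snd (unpair (snd (unpair d))) in
        let rest := snd (unpair c) in
        let f := fst (unpair rest) in let g := snd (unpair rest) in
        match fst (unpair c) with
        | 0 => y = 0 | 1 => y = S x | 2 => y = fst (unpair x) | 3 => y = snd (unpair x)
        | 4 => P (jE f x (fst (unpair y))) /\ P (jE g x (snd (unpair y)))
        | 5 => P (jE g x h) /\ P (jE f h y)
        | 6 => match snd (unpair x) with
               | 0 => P (jE f (fst (unpair x)) y)
               | S n' => P (jE c (pair (fst (unpair x)) n') h) /\
                         P (jE g (pair (fst (unpair x)) (pair n' h)) y) end
        | 7 => P (jS rest x 0 y)
        | _ => y = x end
 | 1 => let f := fst (unpair d) in let x := fst (unpair (snd (unpair d))) in
        let i := fst (unpair (snd (unpair (snd (unpair d))))) in
        let r := snd (unpair (snd (unpair (snd (unpair d))))) in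
        if r =? i then P (jE f (pair x i) 0)
        else (h <> 0 /\ P (jE f (pair x i) h) /\ P (jS f x (S i) r))
 | _ => False end.

Definition semS f x i r := exists f0, forall fl k, f0 <= fl -> f0 <= k -> srchF (eval fl) f x i k = Some r.

Definition sem (j : nat) : Prop :=
 let d := snd (unpair j) in
 match fst (unpair j) with
 | 0 => evs (fst (unpair d)) (fst (unpair (snd (unpair d)))) (snd (unpair (snd (unpair d))))
 | 1 => semS (fst (unpair d)) (fst (unpair (snd (unpair d)))) (fst (unpair (snd (unpair (snd (unpair d))))))
          (snd (unpair (snd (unpair (snd (unpair d))))))
 | _ => True end.

Lemma sem_jE c x y : sem (jE c x y) <-> evs c x y.
Proof. unfold sem, jE. autorewrite with up. tauto. Qed.
Lemma sem_jS f x i r : sem (jS f x i r) <-> semS f x i r.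
Proof. unfold sem, jS. autorewrite with up. tauto. Qed.

Lemma okJ_sound j h (P : nat -> Prop) : (forall J, P J -> sem J) -> okJ j h P -> sem j.
Proof.
  intros HP. unfold okJ, sem.
  set (d := snd (unpair j)). set (c := fst (unpair d)). set (x := fst (unpair (snd (unpair d)))).
  set (y := snd (unpair (snd (unpair d)))).
  destruct (fst (unpair j)) as [|[|kd]]; cbv zeta; [| |tauto].
  - set (f := fst (unpair (snd (unpair c)))). set (g := snd (unpair (snd (unpair c)))).
    assert (Hev: forall (F : nat -> option nat), (forall fl, eval (S fl) c x = F fl) -> 
        (exists f0, forall fl, f0 <= fl -> F fl = Some y) -> evs c x y).
    { intros F HF [f0 Hf]. exists (S f0). intros fl Hfl. destruct fl; [lia|]. rewrite HF. apply Hf. lia. }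
    destruct (fst (unpair c)) as [|[|[|[|[|[|[|[|tg]]]]]]]] eqn:Ec; intros H;
      (eapply Hev; [intros fl; rewrite eval_S'; rewrite Ec; reflexivity|]).
    + exists 0. intros. subst y. auto.
    + exists 0. intros. rewrite H. auto.
    + exists 0. intros. rewrite H. auto.
    + exists 0. intros. rewrite H. auto.
    + destruct H as [H1 H2]. apply HP, sem_jE in H1. apply HP, sem_jE in H2.
      destruct H1 as [f1 H1]. destruct H2 as [f2 H2]. exists (f1 + f2). intros fl Hfl.
      fold f g. rewrite H1, H2 by lia. rewrite pair_unpair. auto.
    + destruct H as [H1 H2]. apply HP, sem_jE in H1. apply HP, sem_jE in H2.
      destruct H1 as [f1 H1]. destruct H2 as [f2 H2]. exists (f1 + f2). intros fl Hfl.
      fold f g. rewrite H1 by lia. apply H2. lia.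
    + fold f g. destruct (snd (unpair x)) as [|n'] eqn:En.
      * apply HP, sem_jE in H. destruct H as [f1 H1]. exists f1. intros fl Hfl. simpl. auto.
      * destruct H as [H1 H2]. apply HP, sem_jE in H1. apply HP, sem_jE in H2.
        destruct H1 as [f1 H1]. destruct H2 as [f2 H2]. exists (f1 + f2). intros fl Hfl.
        simpl. specialize (H1 (S fl) ltac:(lia)). rewrite eval_S', Ec in H1.
        autorewrite with up in H1. fold f g in H1. rewrite H1. apply H2. lia.
    + apply HP, sem_jS in H. destruct H as [f0 H0]. exists f0. intros fl Hfl. apply H0; auto.
    + exists 0. intros. rewrite H. auto.
  - set (i := fst (unpair y)). set (r := snd (unpair y)).
    destruct (r =? i) eqn:Eri.
    + apply Nat.eqb_eq in Eri. intros H. apply HP, sem_jE in H. destruct H as [f1 H1].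
      exists (S f1). intros fl k Hfl Hk. destruct k; [lia|]. simpl. rewrite H1 by lia. congruence.
    + intros [Hh [H1 H2]]. apply HP, sem_jE in H1. apply HP, sem_jS in H2.
      destruct H1 as [f1 H1]. destruct H2 as [f2 H2]. exists (S (f1 + f2)). intros fl k Hfl Hk.
      destruct k; [lia|]. simpl. rewrite H1 by lia. destruct h; [congruence|]. apply H2; lia.
Qed.

Definition jf (e : nat) := fst (unpair e).

Fixpoint validN (L : list nat) : Prop :=
  match L with
  | [] => True
  | e :: L' => okJ (fst (unpair e)) (snd (unpair e)) (fun J => In J (map jf L')) /\ validN L'
  end.

Lemma validN_sound L : validN L -> forall J, In J (map jf L) -> sem J.
Proof.
  induction L as [|e L IH]; simpl; [tauto|]. intros [H1 H2] J [HJ|HJ].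
  - subst. unfold jf. eapply okJ_sound; [|exact H1]. auto.
  - auto.
Qed.

Lemma okJ_mono j h (P Q : nat -> Prop) : (forall J, P J -> Q J) -> okJ j h P -> okJ j h Q.
Proof.
  intros HPQ. unfold okJ.
  repeat match goal with |- context [match ?X with _ => _ end] => destruct X end; firstorder.
Qed.

Lemma validN_app L1 L2 : validN L1 -> validN L2 -> validN (L2 ++ L1).
Proof.
  intros H1. induction L2 as [|e L2 IH]; simpl; auto. intros [Ho Hv]. split; auto.
  eapply okJ_mono; [|exact Ho]. intros J HJ. rewrite map_app. apply in_or_app. auto.
Qed.

Lemma add_entry L1 L2 j h : validN L1 -> validN L2 ->
  okJ j h (fun J => In J (map jf (L2 ++ L1))) ->
  validN (pair j h :: L2 ++ L1) /\ In j (map jf (pair j h :: L2 ++ L1)).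
Proof.
  intros H1 H2 H. split.
  - simpl. autorewrite with up. split; auto. apply validN_app; auto.
  - simpl. left. unfold jf. autorewrite with up. auto.
Qed.

Lemma inmap_app_l J L1 L2 : In J (map jf L1) -> In J (map jf (L2 ++ L1)).
Proof. intros. rewrite map_app. apply in_or_app. auto. Qed.
Lemma inmap_app_r J L1 L2 : In J (map jf L2) -> In J (map jf (L2 ++ L1)).
Proof. intros. rewrite map_app. apply in_or_app. auto. Qed.

Lemma srchF_ge ev r x i k y : srchF ev r x i k = Some y -> i <= y.
Proof.
  revert i. induction k; intros i E; simpl in E; [discriminate|].
  destruct (ev r (pair x i)) as [[|v]|]; try discriminate.
  - inversion E; lia.
  - apply IHk in E. lia.
Qed.

Lemma okJ_jE c x y h P : okJ (jE c x y) h P =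
  match fst (unpair c) with
        | 0 => y = 0 | 1 => y = S x | 2 => y = fst (unpair x) | 3 => y = snd (unpair x)
        | 4 => P (jE (fst (unpair (snd (unpair c)))) x (fst (unpair y))) /\ P (jE (snd (unpair (snd (unpair c)))) x (snd (unpair y)))
        | 5 => P (jE (snd (unpair (snd (unpair c)))) x h) /\ P (jE (fst (unpair (snd (unpair c)))) h y)
        | 6 => match snd (unpair x) with
               | 0 => P (jE (fst (unpair (snd (unpair c)))) (fst (unpair x)) y)
               | S n' => P (jE c (pair (fst (unpair x)) n') h) /\
                         P (jE (snd (unpair (snd (unpair c)))) (pair (fst (unpair x)) (pair n' h)) y) end
        | 7 => P (jS (snd (unpair c)) x 0 y)
        | _ => y = x end.
Proof. unfold okJ, jE. autorewrite with up. reflexivity. Qed.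

Lemma okJ_jS f x i r h P : okJ (jS f x i r) h P =
  if r =? i then P (jE f (pair x i) 0)
  else (h <> 0 /\ P (jE f (pair x i) h) /\ P (jS f x (S i) r)).
Proof. unfold okJ, jS. autorewrite with up. reflexivity. Qed.

Definition CL (J : nat) := exists L, validN L /\ In J (map jf L).

Lemma CL_single j h : okJ j h (fun _ => False) -> CL j.
Proof.
  intros H. exists [pair j h]. split.
  - simpl. autorewrite with up. split; [|exact I]. eapply okJ_mono; [|exact H]. tauto.
  - simpl. left. unfold jf. autorewrite with up. auto.
Qed.

Lemma CL_one J j h : CL J -> okJ j h (fun J' => J' = J) -> CL j.
Proof.
  intros [L [HL HJ]] H.
  assert (H' : okJ j h (fun J' => In J' (map jf ([] ++ L)))) by (apply (okJ_mono _ _ _ _ (fun J0 (E : J0 = J) => eq_ind_r (fun z => In z (map jf ([] ++ L))) HJ E) H)).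
  destruct (add_entry L [] j h HL I H') as [A B]. exists (pair j h :: [] ++ L). auto.
Qed.

Lemma CL_two J1 J2 j h : CL J1 -> CL J2 -> okJ j h (fun J' => J' = J1 \/ J' = J2) -> CL j.
Proof.
  intros [L1 [HL1 HJ1]] [L2 [HL2 HJ2]] H.
  assert (H' : okJ j h (fun J' => In J' (map jf (L2 ++ L1)))).
  { refine (okJ_mono _ _ _ _ _ H). intros J [E|E]; subst; [apply inmap_app_l|apply inmap_app_r]; auto. }
  destruct (add_entry L1 L2 j h HL1 HL2 H') as [A B]. exists (pair j h :: L2 ++ L1). auto.
Qed.

Theorem completeness fl : forall c x y, eval fl c x = Some y -> CL (jE c x y).
Proof.
  induction fl; intros c x y E; [discriminate|].
  rewrite eval_S' in E.
  destruct (fst (unpair c)) as [|[|[|[|[|[|[|[|tg]]]]]]]] eqn:Ec.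
  - inversion E; subst. apply (CL_single _ 0). rewrite okJ_jE, Ec. auto.
  - inversion E; subst. apply (CL_single _ 0). rewrite okJ_jE, Ec. auto.
  - inversion E; subst. apply (CL_single _ 0). rewrite okJ_jE, Ec. auto.
  - inversion E; subst. apply (CL_single _ 0). rewrite okJ_jE, Ec. auto.
  - destruct (eval fl (fst (unpair (snd (unpair c)))) x) as [u|] eqn:E1; [|discriminate].
    destruct (eval fl (snd (unpair (snd (unpair c)))) x) as [v|] eqn:E2; [|discriminate].
    inversion E; subst. apply (CL_two _ _ _ 0 (IHfl _ _ _ E1) (IHfl _ _ _ E2)).
    rewrite okJ_jE, Ec. autorewrite with up. auto.
  - destruct (eval fl (snd (unpair (snd (unpair c)))) x) as [v|] eqn:E1; [|discriminate].
    apply (CL_two _ _ _ v (IHfl _ _ _ E1) (IHfl _ _ _ E)).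
    rewrite okJ_jE, Ec. auto.
  - set (f := fst (unpair (snd (unpair c)))) in *. set (g := snd (unpair (snd (unpair c)))) in *.
    assert (R: forall n y, recF (eval fl) f g (fst (unpair x)) n = Some y ->
               CL (jE c (pair (fst (unpair x)) n) y)).
    { induction n; intros y0 E0; simpl in E0.
      - apply (CL_one _ _ 0 (IHfl _ _ _ E0)). rewrite okJ_jE, Ec. autorewrite with up. auto.
      - destruct (recF (eval fl) f g (fst (unpair x)) n) as [r|] eqn:E1; [|discriminate].
        apply (CL_two _ _ _ r (IHn _ eq_refl) (IHfl _ _ _ E0)).
        rewrite okJ_jE, Ec. autorewrite with up. auto. }
    rewrite <- (pair_unpair x). apply R. auto.
  - set (r := snd (unpair c)) in *.
    assert (S: forall k i y, srchF (eval fl) r x i k = Some y -> CL (jS r x i y)).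
    { induction k; intros i y0 E0; simpl in E0; [discriminate|].
      destruct (eval fl r (pair x i)) as [[|v]|] eqn:E1; try discriminate.
      - inversion E0; subst. apply (CL_one _ _ 0 (IHfl _ _ _ E1)). rewrite okJ_jS, Nat.eqb_refl. auto.
      - apply (CL_two _ _ _ (S v) (IHfl _ _ _ E1) (IHk _ _ E0)). rewrite okJ_jS.
        apply srchF_ge in E0. destruct (y0 =? i) eqn:Ey; [apply Nat.eqb_eq in Ey; lia|]. auto. }
    apply (CL_one _ _ 0 (S _ _ _ E)). rewrite okJ_jE, Ec. auto.
  - inversion E; subst. apply (CL_single _ 0). rewrite okJ_jE, Ec. auto.
Qed.

Definition headOK (c x e : nat) : Prop :=
  let j := jf e in fst (unpair j) = 0 /\ fst (unpair (snd (unpair j))) = c /\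
                    fst (unpair (snd (unpair (snd (unpair j))))) = x.

Definition BndP (c x t : nat) : Prop :=
  exists k, k < S t /\ 1 <= fst (unpair k) /\ headOK c x (fst (unpair (snd (unpair k)))) /\
            validN (dec (fst (unpair k)) (snd (unpair k))).

Lemma BndP_mono c x t t' : t <= t' -> BndP c x t -> BndP c x t'.
Proof. intros H [k [Hk R]]. exists k. split; auto. lia. Qed.

Lemma validN_suffix L1 L2 : validN (L1 ++ L2) -> validN L2.
Proof. induction L1; simpl; tauto. Qed.

Lemma BndP_W c x : (exists t, BndP c x t) <-> W c x.
Proof.
  split.
  - intros [t [k [Hk [Hn [Hh Hv]]]]].
    destruct (fst (unpair k)) as [|n] eqn:En; [lia|]. simpl in Hv.
    destruct Hv as [Ho Hv].
    assert (Hs: sem (jf (fst (unpair (snd (unpair k)))))).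
    { apply (validN_sound (fst (unpair (snd (unpair k))) :: dec n (snd (unpair (snd (unpair k)))))).
      - simpl. auto.
      - simpl. auto. }
    destruct Hh as [H0 [H1 H2]].
    unfold sem in Hs. rewrite H0 in Hs. rewrite H1, H2 in Hs.
    eexists. apply phi_evs. exact Hs.
  - intros [y [fl E]]. destruct (completeness _ _ _ _ E) as [L [HL HJ]].
    apply in_map_iff in HJ. destruct HJ as [e [He HeL]].
    apply in_split in HeL. destruct HeL as [L1 [L2 EL]]. subst L.
    apply validN_suffix in HL.
    set (l := e :: L2) in *.
    exists (pair (length l) (enc l)). exists (pair (length l) (enc l)).
    autorewrite with up. split; [lia|]. split; [simpl; lia|].
    rewrite dec_enc. split; auto.
    unfold l. simpl. autorewrite with up. unfold headOK. rewrite He. unfold jE. autorewrite with up. auto.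
Qed.

Lemma b2_0 b : b2 b = 0 <-> b = true.
Proof. destruct b; simpl; split; congruence. Qed.

Definition ifeq (a : tm) (k : nat) (T E : tm) := ifz (EQB a (K k)) T E.
Lemma den_ifeq a k T E x : den (ifeq a k T E) x = if den a x =? k then den T x else den E x.
Proof.
  unfold ifeq. rewrite den_ifz, den_EQB, den_K. destruct (den a x =? k); reflexivity.
Qed.

Definition JE a b c := TPr (K 0) (TPr a (TPr b c)).
Definition JS a b c d := TPr (K 1) (TPr a (TPr b (TPr c d))).
Lemma den_JE a b c x : den (JE a b c) x = jE (den a x) (den b x) (den c x).
Proof. unfold JE. cbn [den]. rewrite den_K. reflexivity. Qed.
Lemma den_JS a b c d x : den (JS a b c d) x = jS (den a x) (den b x) (den c x) (den d x).
Proof. unfold JS. cbn [den]. rewrite den_K. reflexivity. Qed.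

Definition MEM := bex (EQB (fs (ELT (sn (sn TF)) TSn)) (fs TF)) (fs TSn).
Lemma den_MEM J n b : den MEM (pair J (pair n b)) = 0 <-> In J (map jf (dec n b)).
Proof.
  unfold MEM.
  assert (E: forall m, den (EQB (fs (ELT (sn (sn TF)) TSn)) (fs TF)) (pair (pair J (pair n b)) m) =
     b2 (fst (unpair (fst (unpair (Nat.iter m snd' b)))) =? J)).
  { intros m. rewrite den_EQB, den_fs, den_ELT. cbn [den fs sn]. autorewrite with up. reflexivity. }
  assert (Ec: den (fs TSn) (pair J (pair n b)) = n) by (cbn [den fs sn]; autorewrite with up; auto).
  rewrite den_bex, Ec. setoid_rewrite E. setoid_rewrite b2_0. setoid_rewrite Nat.eqb_eq.
  rewrite (in_dec_iff n b (fun y => fst (unpair y) = J)). rewrite in_map_iff.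
  unfold jf. firstorder.
Qed.

Definition memp (J p : tm) := TCm MEM (TPr J p).
Lemma den_memp J p x : den (memp J p) x = den MEM (pair (den J x) (den p x)).
Proof. reflexivity. Qed.

Section OKJ.
Let Y := TId.
Let e := fs Y. Let p := sn Y. Let j := fs e. Let h := sn e. Let kind := fs j. Let d := sn j.
Let c := fs d. Let x := fs (sn d). Let y := sn (sn d). Let tag := fs c. Let rest := sn c.
Let f := fs rest. Let g := sn rest.
Let mem J := memp J p.
Definition body0 :=
  ifeq tag 0 (EQB y (K 0)) (ifeq tag 1 (EQB y (TCm TS x)) (ifeq tag 2 (EQB y (fs x))
  (ifeq tag 3 (EQB y (sn x))
  (ifeq tag 4 (andz (mem (JE f x (fs y))) (mem (JE g x (sn y))))
  (ifeq tag 5 (andz (mem (JE g x h)) (mem (JE f h y)))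
  (ifeq tag 6 (ifz (sn x) (mem (JE f (fs x) y))
                 (andz (mem (JE c (TPr (fs x) (TCm PRED (sn x))) h))
                       (mem (JE g (TPr (fs x) (TPr (TCm PRED (sn x)) h)) y))))
  (ifeq tag 7 (mem (JS rest x (K 0) y)) (EQB y x)))))))).
Let f1 := fs d. Let x1 := fs (sn d). Let i1 := fs (sn (sn d)). Let r1 := sn (sn (sn d)).
Definition body1 :=
  ifz (EQB r1 i1) (mem (JE f1 (TPr x1 i1) (K 0)))
      (andz (notz h) (andz (mem (JE f1 (TPr x1 i1) h)) (mem (JS f1 x1 (TCm TS i1) r1)))).
Definition OKJP := ifeq kind 0 body0 (ifeq kind 1 body1 (K 1)).
End OKJ.

Lemma andz0 a b : a + b = 0 <-> a = 0 /\ b = 0.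
Proof. lia. Qed.

Lemma den_OKJP e p : den OKJP (pair e p) = 0 <->
   okJ (jf e) (snd (unpair e)) (fun J => den MEM (pair J p) = 0).
Proof.
  unfold OKJP, body0, body1.
  repeat first [rewrite den_ifeq | rewrite den_ifz | rewrite den_andz | rewrite den_EQB
    | rewrite den_memp | rewrite den_JE | rewrite den_JS | rewrite den_fs | rewrite den_sn
    | rewrite den_K | rewrite den_notz | rewrite den_PRED | progress cbn [den]].
  autorewrite with up. unfold okJ, jf.
  set (J0 := fst (unpair e)). set (D := snd (unpair J0)).
  destruct (fst (unpair J0)) as [|[|kd]]; cbn [Nat.eqb].
  - set (C := fst (unpair D)). set (X := fst (unpair (snd (unpair D)))). set (Yv := snd (unpair (snd (unpair D)))).
    destruct (fst (unpair C)) as [|[|[|[|[|[|[|[|tg]]]]]]]]; cbn [Nat.eqb];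
      rewrite ?andz0, ?b2_0, ?Nat.eqb_eq; try tauto.
    destruct (snd (unpair X)) as [|n']; cbn [Nat.pred]; rewrite ?andz0; tauto.
  - set (I1 := fst (unpair (snd (unpair (snd (unpair D)))))).
    set (R1 := snd (unpair (snd (unpair (snd (unpair D)))))).
    destruct (R1 =? I1) eqn:E; cbn [b2]; [tauto|].
    rewrite !andz0. destruct (snd (unpair e)); cbn; intuition congruence.
  - split; [discriminate| tauto].
Qed.

Ltac dsimp := repeat first [rewrite den_ifeq | rewrite den_ifz | rewrite den_andz | rewrite den_EQB
  | rewrite den_LTB | rewrite den_memp | rewrite den_JE | rewrite den_JS | rewrite den_fs | rewrite den_sn
  | rewrite den_K | rewrite den_notz | rewrite den_PRED | rewrite den_op2 | rewrite den_SUB | rewrite den_ADD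
  | rewrite den_DROP | rewrite den_ELT | progress cbn [den] | rewrite fst_up | rewrite snd_up].
Ltac dsimpH H := repeat first [rewrite den_ifeq in H | rewrite den_ifz in H | rewrite den_andz in H | rewrite den_EQB in H
  | rewrite den_LTB in H | rewrite den_memp in H | rewrite den_JE in H | rewrite den_JS in H | rewrite den_fs in H | rewrite den_sn in H
  | rewrite den_K in H | rewrite den_notz in H | rewrite den_PRED in H | rewrite den_op2 in H | rewrite den_SUB in H | rewrite den_ADD in H
  | rewrite den_DROP in H | rewrite den_ELT in H | progress cbn [den] in H | rewrite fst_up in H | rewrite snd_up in H].

Lemma okJ_ext j h (P Q : nat -> Prop) : (forall J, P J <-> Q J) -> (okJ j h P <-> okJ j h Q).
Proof. intros H. split; apply okJ_mono; firstorder. Qed.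

Lemma validN_nth l : validN l <-> forall m, m < length l ->
  okJ (jf (nth m l 0)) (snd (unpair (nth m l 0))) (fun J => In J (map jf (skipn (S m) l))).
Proof.
  induction l as [|e l IH]; simpl.
  - split; auto. intros; lia.
  - rewrite IH. split.
    + intros [H1 H2] m Hm. destruct m; [exact H1|]. apply H2. lia.
    + intros H. split; [apply (H 0); lia|]. intros m Hm. apply (H (S m)). lia.
Qed.

Definition VAL := ball (TCm OKJP (TPr (ELT (sn TF) TSn)
                         (TPr (op2 SUB (fs TF) (TCm TS TSn)) (sn (op2 DROP (sn TF) TSn))))) (fs TId).

Lemma den_VAL n b : den VAL (pair n b) = 0 <-> validN (dec n b).
Proof.
  unfold VAL. rewrite den_ball.
  assert (Ec: den (fs TId) (pair n b) = n) by (cbn [den fs]; autorewrite with up; auto).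
  rewrite Ec. rewrite validN_nth, dec_length.
  split; intros H m Hm; specialize (H m Hm).
  - dsimpH H.
    apply den_OKJP in H. rewrite nth_dec by auto.
    eapply okJ_ext; [|exact H]. intros J. rewrite den_MEM. rewrite skipn_dec by lia. reflexivity.
  - dsimp.
    apply den_OKJP. rewrite nth_dec in H by auto.
    eapply okJ_ext; [|exact H]. intros J. rewrite den_MEM. rewrite skipn_dec by lia. reflexivity.
Qed.

Section CHKs.
Let X := TF. Let c := fs (fs X). Let x := sn (fs X). Let k := TSn. Let n := fs k. Let b := sn k.
Let j := fs (fs b).
Definition CHK := andz (LTB (K 0) n)
   (andz (andz (EQB (fs j) (K 0)) (andz (EQB (fs (sn j)) c) (EQB (fs (sn (sn j))) x)))
         (TCm VAL (TPr n b))).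
End CHKs.

Definition BND := bex CHK (TCm TS TSn).

Lemma den_BND c x t : den BND (pair (pair c x) t) = 0 <-> BndP c x t.
Proof.
  unfold BND. rewrite den_bex.
  assert (Ec: den (TCm TS TSn) (pair (pair c x) t) = S t) by (cbn [den]; autorewrite with up; auto).
  rewrite Ec. unfold BndP. split; intros [kk [Hk H]]; exists kk; split; auto.
  - unfold CHK in H. dsimpH H.
    repeat rewrite andz0 in H. destruct H as [H1 [[H2 [H3 H4]] H5]].
    rewrite b2_0, Nat.ltb_lt in H1. rewrite b2_0, Nat.eqb_eq in H2, H3, H4.
    apply den_VAL in H5. unfold headOK, jf. auto.
  - destruct H as [H1 [[H2 [H3 H4]] H5]]. unfold CHK. dsimp. unfold jf in *.
    rewrite H2, H3, H4, !Nat.eqb_refl. apply (proj2 (den_VAL _ _)) in H5. rewrite H5.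
    assert (0 <? fst (unpair kk) = true) by (apply Nat.ltb_lt; lia). rewrite H. reflexivity.
Qed.

Lemma ball_list P cnt X n b (Q : nat -> Prop) : den cnt X = n ->
  (forall m, m < n -> (den P (pair X m) = 0 <-> Q (fst (unpair (Nat.iter m snd' b))))) ->
  (den (ball P cnt) X = 0 <-> forall y, In y (dec n b) -> Q y).
Proof.
  intros Hc H. rewrite den_ball, Hc, <- all_dec_iff. split; intros H1 m Hm; apply H; auto.
Qed.

Lemma bex_list P cnt X n b (Q : nat -> Prop) : den cnt X = n ->
  (forall m, m < n -> (den P (pair X m) = 0 <-> Q (fst (unpair (Nat.iter m snd' b))))) ->
  (den (bex P cnt) X = 0 <-> exists y, In y (dec n b) /\ Q y).
Proof.
  intros Hc H. rewrite den_bex, Hc, <- in_dec_iff. split; intros [m [Hm H1]]; exists m; split; auto; apply H; auto.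
Qed.

Lemma ball_nat P cnt X n (Q : nat -> Prop) : den cnt X = n ->
  (forall m, m < n -> (den P (pair X m) = 0 <-> Q m)) ->
  (den (ball P cnt) X = 0 <-> forall m, m < n -> Q m).
Proof.
  intros Hc H. rewrite den_ball, Hc. split; intros H1 m Hm; apply H; auto.
Qed.

Definition MEMV := bex (EQB (ELT (sn (sn TF)) TSn) (fs TF)) (fs (sn TId)).
Lemma den_MEMV a n b : den MEMV (pair a (pair n b)) = 0 <-> In a (dec n b).
Proof.
  unfold MEMV. rewrite (bex_list _ _ _ n b (fun y => y = a)).
  - firstorder congruence.
  - dsimp. auto.
  - intros m Hm. dsimp. rewrite b2_0, Nat.eqb_eq. reflexivity.
Qed.

Definition SUBL := ball (TCm MEMV (TPr (ELT (sn (fs TF)) TSn) (sn TF))) (fs (fs TId)).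
Lemma den_SUBL n1 b1 n2 b2 : den SUBL (pair (pair n1 b1) (pair n2 b2)) = 0 <-> incl (dec n1 b1) (dec n2 b2).
Proof.
  unfold SUBL. rewrite (ball_list _ _ _ n1 b1 (fun y => In y (dec n2 b2))).
  - unfold incl. tauto.
  - dsimp. auto.
  - intros m Hm. dsimp. rewrite den_MEMV. reflexivity.
Qed.

Definition BNDc (ee yy ss : tm) := TCm BND (TPr (TPr ee yy) ss).
Lemma den_BNDc ee yy ss x : den (BNDc ee yy ss) x = den BND (pair (pair (den ee x) (den yy x)) (den ss x)).
Proof. reflexivity. Qed.

Definition ALLNOTU := ball (notz (BNDc (fs TF) (ELT (sn (sn (sn TF))) TSn) (fs (sn TF)))) (fs (sn (sn TId))).
Lemma den_ALLNOTU u s n b : den ALLNOTU (pair u (pair s (pair n b))) = 0 <->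
   forall y, In y (dec n b) -> ~ BndP u y s.
Proof.
  unfold ALLNOTU. apply ball_list.
  - dsimp. auto.
  - intros m Hm. rewrite den_notz, den_BNDc. dsimp.
    destruct (den BND _) eqn:E.
    + split; [discriminate|]. intros H. exfalso. apply H. apply den_BND. exact E.
    + split; auto. intros _ H. apply den_BND in H. congruence.
Qed.

Definition EXU := bex (BNDc (fs TF) (ELT (sn (sn (sn TF))) TSn) (fs (sn TF))) (fs (sn (sn TId))).
Lemma den_EXU u s n b : den EXU (pair u (pair s (pair n b))) = 0 <->
   exists y, In y (dec n b) /\ BndP u y s.
Proof.
  unfold EXU. apply bex_list.
  - dsimp. auto.
  - intros m Hm. rewrite den_BNDc. dsimp. apply den_BND.
Qed.

Definition CERT := ball (BNDc (fs TF) (TPr (ELT (sn (sn (sn TF))) TSn) (sn (fs (sn TF)))) (fs (fs (sn TF))))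
                        (fs (sn (sn TId))).
Lemma den_CERT e s v n b : den CERT (pair e (pair (pair s v) (pair n b))) = 0 <->
   forall y, In y (dec n b) -> BndP e (pair y v) s.
Proof.
  unfold CERT. apply ball_list.
  - dsimp. auto.
  - intros m Hm. rewrite den_BNDc. dsimp. apply den_BND.
Qed.

Section CLOSs.
(* input W = pair e (pair (pair s (pair cb v)) L) *)
Let e' := fs TF. Let s' := fs (fs (sn TF)). Let v' := sn (sn (fs (sn TF))). Let L' := sn (sn TF).
Let A := ifz (BNDc e' (TPr TSn v') s') (TCm MEMV (TPr TSn L')) (K 0).
Let e'' := fs (fs TF). Let y'' := sn TF. Let s'' := fs (fs (sn (fs TF))). Let L'' := sn (sn (fs TF)).
Let B := ball (ifz (BNDc e'' (TPr y'' (ELT (sn L'') TSn)) s'') (TCm MEMV (TPr y'' L'')) (K 0)) (fs L').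
Definition CLOS := ball (andz A B) (fs (sn (fs (sn TId)))).
End CLOSs.

Lemma imp_ifz (a b : nat) (P Q : Prop) : (a = 0 <-> P) -> (b = 0 <-> Q) ->
  ((match a with 0 => b | S _ => 0 end) = 0 <-> (P -> Q)).
Proof.
  intros H1 H2. destruct a.
  - rewrite H2. split; auto. intros H. apply H, H1. auto.
  - split; [|auto]. intros _ HP. apply H1 in HP. discriminate.
Qed.

Lemma den_CLOS e s cb v n b : den CLOS (pair e (pair (pair s (pair cb v)) (pair n b))) = 0 <->
  forall y, y < cb -> (BndP e (pair y v) s -> In y (dec n b)) /\
                      (forall z, In z (dec n b) -> BndP e (pair y z) s -> In y (dec n b)).
Proof.
  unfold CLOS. apply ball_nat.
  - dsimp. auto.
  - intros y Hy. rewrite den_andz.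
    match goal with |- den ?A ?X + den ?B ?X = 0 <-> _ =>
      assert (HA: den A X = 0 <-> (BndP e (pair y v) s -> In y (dec n b)));
      [|assert (HB: den B X = 0 <-> (forall z, In z (dec n b) -> BndP e (pair y z) s -> In y (dec n b)));
        [|rewrite andz0, HA, HB; reflexivity]] end.
    + rewrite den_ifz, den_K. apply imp_ifz.
      * rewrite den_BNDc. dsimp. apply den_BND.
      * dsimp. apply den_MEMV.
    + apply ball_list.
      * dsimp. auto.
      * intros m Hm. rewrite den_ifz, den_K. apply imp_ifz.
        -- rewrite den_BNDc. dsimp. apply den_BND.
        -- dsimp. apply den_MEMV.
Qed.

Definition PAR := TCm (TRc TZ (notz gR)) (TPr TZ TId).
Lemma den_PAR n : den PAR n = b2 (Nat.even n).
Proof.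
  unfold PAR. cbn [den]. autorewrite with up. unfold rec_den. induction n; [reflexivity|].
  cbn [nat_rect]. set (r := nat_rect _ _ _ n) in *. rewrite den_notz. unfold gR. cbn [den]. autorewrite with up. rewrite IHn.
  rewrite Nat.even_succ, <- Nat.negb_even. destruct (Nat.even n); reflexivity.
Qed.

Lemma div2_S m : Nat.div2 (S m) = Nat.div2 m + b2 (Nat.even m).
Proof.
  induction m using (well_founded_induction lt_wf).
  destruct m as [|[|m]]; [reflexivity|reflexivity|].
  change (Nat.div2 (S (S (S m)))) with (S (Nat.div2 (S m))).
  change (Nat.div2 (S (S m))) with (S (Nat.div2 m)).
  rewrite H by lia. change (Nat.even (S (S m))) with (Nat.even m). lia.
Qed.

Definition DIV2 := TCm (TRc TZ (op2 ADD gR (TCm PAR gM))) (TPr TZ TId).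
Lemma den_DIV2 n : den DIV2 n = Nat.div2 n.
Proof.
  unfold DIV2. cbn [den]. autorewrite with up. unfold rec_den. induction n; [reflexivity|].
  cbn [nat_rect]. set (r := nat_rect _ _ _ n) in *. rewrite den_op2, den_ADD. unfold gR, gM. cbn [den]. autorewrite with up.
  rewrite den_PAR, IHn, div2_S. reflexivity.
Qed.


Definition dl L := dec (fst (unpair L)) (snd (unpair L)).
Lemma den_MEMV' a L : den MEMV (pair a L) = 0 <-> In a (dl L).
Proof. rewrite <- (pair_unpair L) at 1. apply den_MEMV. Qed.
Lemma den_SUBL' L1 L2 : den SUBL (pair L1 L2) = 0 <-> incl (dl L1) (dl L2).
Proof. rewrite <- (pair_unpair L1) at 1. rewrite <- (pair_unpair L2) at 1. apply den_SUBL. Qed.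
Lemma den_ALLNOTU' u s L : den ALLNOTU (pair u (pair s L)) = 0 <-> forall y, In y (dl L) -> ~ BndP u y s.
Proof. rewrite <- (pair_unpair L) at 1. apply den_ALLNOTU. Qed.
Lemma den_EXU' u s L : den EXU (pair u (pair s L)) = 0 <-> exists y, In y (dl L) /\ BndP u y s.
Proof. rewrite <- (pair_unpair L) at 1. apply den_EXU. Qed.
Lemma den_CERT' e s v L : den CERT (pair e (pair (pair s v) L)) = 0 <->
   forall y, In y (dl L) -> BndP e (pair y v) s.
Proof. rewrite <- (pair_unpair L) at 1. apply den_CERT. Qed.
Lemma den_CLOS' e s cb v L : den CLOS (pair e (pair (pair s (pair cb v)) L)) = 0 <->
  forall y, y < cb -> (BndP e (pair y v) s -> In y (dl L)) /\
                      (forall z, In z (dl L) -> BndP e (pair y z) s -> In y (dl L)).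
Proof. rewrite <- (pair_unpair L) at 1. apply den_CLOS. Qed.

Definition em k := fst (unpair k).
Definition es k := fst (unpair (snd (unpair k))).
Definition ecb k := fst (unpair (snd (unpair (snd (unpair k))))).
Definition eHc k := snd (unpair (snd (unpair (snd (unpair k))))).
Definition eH k := dec (fst (unpair (eHc k))) (snd (unpair (eHc k))).
Definition ev k := Nat.div2 (em k).
Definition mk m s c L := pair m (pair s (pair c (pair (length L) (enc L)))).
Lemma mk_em m s c L : em (mk m s c L) = m. Proof. unfold em, mk. autorewrite with up. auto. Qed.
Lemma mk_es m s c L : es (mk m s c L) = s. Proof. unfold es, mk. autorewrite with up. auto. Qed.
Lemma mk_ecb m s c L : ecb (mk m s c L) = c. Proof. unfold ecb, mk. autorewrite with up. auto. Qed.
Lemma mk_eH m s c L : eH (mk m s c L) = L.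
Proof. unfold eH, eHc, mk. autorewrite with up. apply dec_enc. Qed.

Definition Top e u k :=
  (forall y, y < ecb k -> (BndP e (pair y (ev k)) (es k) -> In y (eH k)) /\
                         (forall z, In z (eH k) -> BndP e (pair y z) (es k) -> In y (eH k))) /\
  (forall y, In y (eH k) -> BndP e (pair y (ev k)) (es k)) /\
  (if Nat.even (em k) then exists y, In y (eH k) /\ BndP u y (es k)
   else forall y, In y (eH k) -> ~ BndP u y (es k)).

Definition Rel e u k1 k2 :=
  (Nat.even (em k1) = false -> Nat.even (em k2) = false) /\ es k1 < es k2 /\ ecb k1 < ecb k2 /\
  In (ev k1) (eH k2) /\ incl (eH k1) (eH k2) /\ Top e u k2.

Section RELs.
Let e := fs (fs TId). Let u := sn (fs TId). Let k1 := fs (sn TId). Let k2 := sn (sn TId).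
Let m k := fs k. Let s k := fs (sn k). Let cb k := fs (sn (sn k)). Let Hc k := sn (sn (sn k)).
Let v k := TCm DIV2 (m k).
Definition RELP :=
  andz (ifz (TCm PAR (m k1)) (K 0) (notz (TCm PAR (m k2))))
 (andz (LTB (s k1) (s k2))
 (andz (LTB (cb k1) (cb k2))
 (andz (TCm MEMV (TPr (v k1) (Hc k2)))
 (andz (TCm SUBL (TPr (Hc k1) (Hc k2)))
 (andz (TCm CLOS (TPr e (TPr (TPr (s k2) (TPr (cb k2) (v k2))) (Hc k2))))
 (andz (TCm CERT (TPr e (TPr (TPr (s k2) (v k2)) (Hc k2))))
       (ifz (TCm PAR (m k2)) (TCm EXU (TPr u (TPr (s k2) (Hc k2))))
                             (TCm ALLNOTU (TPr u (TPr (s k2) (Hc k2))))))))))).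
End RELs.

Lemma den_RELP e u k1 k2 : den RELP (pair (pair e u) (pair k1 k2)) = 0 <-> Rel e u k1 k2.
Proof.
  unfold RELP. rewrite !den_andz, !andz0.
  dsimp. rewrite !den_DIV2, !den_PAR.
  rewrite den_MEMV', den_SUBL', den_CLOS', den_CERT', !b2_0, !Nat.ltb_lt.
  unfold Rel, Top, ev, em, es, ecb, eH, eHc. fold (dl (snd (unpair (snd (unpair (snd (unpair k1))))))).
  fold (dl (snd (unpair (snd (unpair (snd (unpair k2))))))).
  set (S1 := fst (unpair (snd (unpair k1)))). set (S2 := fst (unpair (snd (unpair k2)))).
  assert (HT: forall (A B : Prop) (x : nat), (x = 0 <-> A) -> (x = 0 <-> B) -> (x = 0 <-> A)) by tauto.
  destruct (Nat.even (fst (unpair k2))) eqn:E2; destruct (Nat.even (fst (unpair k1))) eqn:E1;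
    cbn [b2]; rewrite ?den_EXU', ?den_ALLNOTU', ?den_notz; cbn [b2];
    (split; [intros (H1 & H2 & H3 & H4 & H5 & H6 & H7 & H8); repeat split; auto; try discriminate
            |intros (H1 & H2 & H3 & H4 & H5 & (H6 & H7 & H8)); repeat split; auto]);
    try (intros; discriminate).
  all: try (specialize (H1 eq_refl); discriminate).
  all: try (apply H1; reflexivity).
  all: try (intros; edestruct H6 as [Ha Hb]; eauto; fail).
  all: match goal with |- ?G => idtac "GOAL" G end.
Qed.

Definition tprog e u := TCm RELP (TPr (TPr (K e) (K u)) TF).
Definition tfun e u := mu (tprog e u).

Lemma den_TPr a b x : den (TPr a b) x = pair (den a x) (den b x). Proof. reflexivity. Qed.
Lemma den_TCm a b x : den (TCm a b) x = den a (den b x). Proof. reflexivity. Qed.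
Lemma den_TF x : den TF x = fst (unpair x). Proof. reflexivity. Qed.
Lemma den_TSn x : den TSn x = snd (unpair x). Proof. reflexivity. Qed.
Lemma cc_TCm a b : cc (TCm a b) = pair 5 (pair (cc a) (cc b)). Proof. reflexivity. Qed.
Lemma cc_TPr a b : cc (TPr a b) = pair 4 (pair (cc a) (cc b)). Proof. reflexivity. Qed.

Lemma ce_rel_tfun e u a b : ce_rel (tfun e u) a b <-> Rel e u a b.
Proof.
  unfold ce_rel, tfun. rewrite W_mu. unfold tprog.
  split.
  - intros [i H]. rewrite den_TCm, !den_TPr, !den_K, den_TF, fst_up in H. apply den_RELP. exact H.
  - intros H. exists 0. rewrite den_TCm, !den_TPr, !den_K, den_TF, fst_up. apply den_RELP. exact H.
Qed.

Definition KC := TCm (TRc (K (cc TZ)) (TPr (K 5) (TPr (K (cc TS)) gR))) (TPr TZ TId).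
Lemma den_KC n : den KC n = cc (K n).
Proof.
  unfold KC. rewrite den_TCm, den_TPr. cbn [den]. rewrite !fst_up, !snd_up. unfold rec_den.
  induction n.
  - cbn [nat_rect]. rewrite den_K. reflexivity.
  - cbn [nat_rect]. set (r := nat_rect _ _ _ n) in *. rewrite ?den_TPr, !den_K. unfold gR.
    rewrite den_TCm, den_TSn, den_TSn, !snd_up. rewrite IHn. reflexivity.
Qed.

Definition TT := TPr (K 7) (TPr (K 5) (TPr (K (cc RELP)) (TPr (K 4)
        (TPr (TPr (K 4) (TPr (TCm KC TF) (TCm KC TSn))) (K (cc TF)))))).

Lemma den_TT e u : den TT (pair e u) = tfun e u.
Proof.
  unfold TT. rewrite !den_TPr, !den_K, !den_TCm, den_TF, den_TSn, fst_up, snd_up, !den_KC.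
  unfold tfun, mu, tprog. rewrite cc_TCm, !cc_TPr. reflexivity.
Qed.

Lemma tfun_computable : computable2 tfun.
Proof. exists (cc TT). intros a b. rewrite <- den_TT. apply cc_phi. Qed.

Definition eF := mu (EQB (fs TF) (fs (sn TF))).
Lemma W_eF n k : W eF (pair n k) <-> n = em k.
Proof.
  unfold eF. rewrite W_mu. split.
  - intros [i H]. dsimpH H. rewrite b2_0, Nat.eqb_eq in H. auto.
  - intros H. exists 0. dsimp. rewrite b2_0, Nat.eqb_eq. auto.
Qed.

Section eGs.
Variable e : nat.
Let kk := fs TF. Let mm := sn TF. Let tt := TSn.
Definition eGt := andz (EQB (TCm PAR mm) (TCm PAR (fs kk)))
   (andz (BNDc (K e) (TPr (TCm DIV2 (fs kk)) (TCm DIV2 mm)) tt)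
         (TCm CERT (TPr (K e) (TPr (TPr tt (TCm DIV2 mm)) (sn (sn (sn kk))))))).
End eGs.
Definition eG e := mu (eGt e).

Lemma W_eG e k m : W (eG e) (pair k m) <-> exists t,
   Nat.even m = Nat.even (em k) /\ BndP e (pair (ev k) (Nat.div2 m)) t /\
   forall y, In y (eH k) -> BndP e (pair y (Nat.div2 m)) t.
Proof.
  unfold eG. rewrite W_mu. unfold eGt.
  apply Morphisms_Prop.ex_iff_morphism. intros t.
  rewrite !den_andz, !andz0, den_BNDc. dsimp. rewrite !den_PAR, !den_DIV2, den_CERT', den_BND.
  unfold ev, em, eH, eHc, dl. rewrite b2_0, Nat.eqb_eq.
  assert (Hb: forall c1 c2 : bool, b2 c1 = b2 c2 <-> c1 = c2) by (intros [|] [|]; simpl; split; congruence).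
  rewrite Hb. reflexivity.
Qed.

Section Topo.
Variables e u : nat.
Hypothesis Htr : transitive (ce_rel e).
Let R := ce_rel e.

Lemma R_Bnd y z : R y z <-> exists s, BndP e (pair y z) s.
Proof. unfold R, ce_rel. rewrite BndP_W. reflexivity. Qed.
Lemma Bnd_R y z s : BndP e (pair y z) s -> R y z.
Proof. intros H. apply R_Bnd. eauto. Qed.
Lemma U_Bnd y : W u y <-> exists s, BndP u y s.
Proof. rewrite BndP_W. reflexivity. Qed.

Lemma Rel_trans k1 k2 k3 : Rel e u k1 k2 -> Rel e u k2 k3 -> Rel e u k1 k3.
Proof.
  unfold Rel. intros (A1 & B1 & C1 & D1 & E1 & F1) (A2 & B2 & C2 & D2 & E2 & F2).
  split; [auto|]. split; [lia|]. split; [lia|]. split; [apply E2; auto|].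
  split; [intros y Hy; apply E2, E1, Hy|exact F2].
Qed.

Definition AA (I : nat -> Prop) := forall x, W u x -> ~ I x.

Definition gI (I : nat -> Prop) (k : nat) : Prop :=
  I (ev k) /\ (forall y, In y (eH k) -> I y) /\ (Nat.even (em k) = false -> AA I).

Lemma fin_list (P : nat -> Prop) c : exists L, forall y, In y L <-> y < c /\ P y.
Proof.
  induction c.
  - exists []. simpl. intros; lia.
  - destruct IHc as [L HL]. destruct (classic (P c)).
    + exists (c :: L). intros y. simpl. rewrite HL. split; [intros [E|[H1 H2]]; subst; split; auto; lia|].
      intros [H1 H2]. destruct (Nat.eq_dec c y); auto. right. split; auto. lia.
    + exists L. intros y. rewrite HL. split; [intros [H1 H2]; split; auto; lia|].
      intros [H1 H2]. split; auto. destruct (Nat.eq_dec c y); [subst; tauto|lia].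
Qed.

Lemma upper_bound (I : nat -> Prop) : is_ideal R I -> forall L, L <> [] -> (forall y, In y L -> I y) ->
  exists b, I b /\ forall y, In y L -> R y b.
Proof.
  intros [_ [Hlow Hdir]]. induction L as [|a L IH]; [congruence|]. intros _ HL.
  destruct L as [|a' L'].
  - destruct (Hdir a a) as [c [Ic [Hc _]]]; [apply HL; simpl; auto|apply HL; simpl; auto|].
    exists c. split; auto. intros y [E|[]]; subst; auto.
  - destruct IH as [b [Ib Hb]]; [congruence|intros; apply HL; simpl; auto|].
    destruct (Hdir a b) as [c [Ic [Hac Hbc]]]; [apply HL; simpl; auto|auto|].
    exists c. split; auto. intros y [E|Hy]; [subst; auto|]. eapply Htr; [apply Hb; auto|auto].
Qed.

Lemma common_stage (P : nat -> nat -> Prop) (L : list nat) :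
  (forall y s s', s <= s' -> P y s -> P y s') -> (forall y, In y L -> exists s, P y s) ->
  forall N, exists s, N <= s /\ forall y, In y L -> P y s.
Proof.
  intros Hm. induction L as [|a L IH]; intros H N.
  - exists N. split; auto. intros y [].
  - destruct IH with (N := N) as [s [Hs HL]]; [intros; apply H; simpl; auto|].
    destruct (H a) as [sa Ha]; [simpl; auto|].
    exists (s + sa). split; [lia|]. intros y [E|Hy]; [subst; eapply Hm; [|exact Ha]; lia|].
    eapply Hm; [|apply HL; auto]; lia.
Qed.

Fixpoint maxl (L : list nat) := match L with [] => 0 | a :: L => Nat.max a (maxl L) end.
Lemma maxl_ge L y : In y L -> y <= maxl L.
Proof. induction L; simpl; [tauto|]. intros [E|H]; subst; [lia|]. specialize (IHL H). lia. Qed.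

Lemma gI_ideal I : is_ideal R I -> is_ideal (Rel e u) (gI I).
Proof.
  intros HI. pose proof HI as [[n In0] [Hlow Hdir]].
  split; [|split].
  - exists (mk (2 * n) 0 0 []). unfold gI, ev. rewrite mk_em, mk_eH, Nat.div2_double, Nat.even_even.
    split; auto. split; [intros y []|discriminate].
  - intros a b (A1 & B1 & C1 & D1 & E1 & F1) (Ib & IH & IA). unfold gI. split; [|split]; auto.
  - intros k1 k2 (I1 & H1 & A1) (I2 & H2 & A2).
    set (L0 := ev k1 :: ev k2 :: eH k1 ++ eH k2).
    assert (HL0: forall y, In y L0 -> I y).
    { intros y [E|[E|Hy]]; subst; auto. apply in_app_or in Hy. destruct Hy; auto. }
    destruct (classic (AA I)) as [HA|HnA].
    + set (c := S (ecb k1 + ecb k2 + maxl L0)).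
      destruct (fin_list I c) as [H' HH'].
      destruct (upper_bound I HI (ev k1 :: H')) as [b [Ib Hb]]; [congruence| |].
      { intros y [E|Hy]; [subst; auto|apply HH' in Hy; tauto]. }
      destruct (common_stage (fun y s => BndP e (pair y b) s) H') with (N := S (es k1 + es k2)) as [s [Hs Hst]].
      { intros; eapply BndP_mono; eauto. }
      { intros y Hy. apply R_Bnd. apply Hb. simpl; auto. }
      remember (mk (2 * b + 1) s c H') as k' eqn:Hk'.
      assert (Ek : ev k' = b) by (rewrite Hk'; unfold ev; rewrite mk_em; apply Nat.div2_odd').
      assert (Em : Nat.even (em k') = false) by (rewrite Hk'; rewrite mk_em; apply Nat.even_odd).
      assert (Top e u k').
      { unfold Top. rewrite Ek, Em. rewrite Hk'. rewrite mk_ecb, mk_eH, mk_es. split; [|split].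
        - intros y Hy. split.
          + intros HB. apply HH'. split; auto. apply (Hlow b); auto. eapply Bnd_R; eauto.
          + intros z Hz HB. apply HH'. split; auto. apply HH' in Hz. apply (Hlow z); [|tauto]. eapply Bnd_R; eauto.
        - auto.
        - intros y Hy HB. apply HH' in Hy. apply (HA y); [apply U_Bnd; eauto|tauto]. }
      assert (HR: forall k, gI I k -> ecb k < c -> es k < s -> (forall y, In y (ev k :: eH k) -> y < c) -> Rel e u k k').
      { intros k (Ik & Hk & Ak) Hc Hsk Hlt. unfold Rel. rewrite Em. split; [auto|]. split.
        { rewrite Hk'. rewrite mk_es. auto. } split. { rewrite Hk'. rewrite mk_ecb. auto. }
        split. { rewrite Hk'. rewrite mk_eH. apply HH'. split; auto. apply Hlt. simpl; auto. }
        split; auto. rewrite Hk'. rewrite mk_eH. intros y Hy. apply HH'. split; auto. apply Hlt. simpl; auto. }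
      exists k'. split; [|split].
      * unfold gI. rewrite Ek, Em. split; auto. split; [|auto]. rewrite Hk'. rewrite mk_eH. intros y Hy. apply HH' in Hy. tauto.
      * apply HR; [split; auto|unfold c; lia|lia|].
        intros y Hy. assert (y <= maxl L0); [|unfold c; lia]. apply maxl_ge.
        destruct Hy as [E|Hy]; [subst; simpl; auto|]. right. right. apply in_or_app. auto.
      * apply HR; [split; auto|unfold c; lia|lia|].
        intros y Hy. assert (y <= maxl L0); [|unfold c; lia]. apply maxl_ge.
        destruct Hy as [E|Hy]; [subst; simpl; auto|]. right. right. apply in_or_app. auto.
    + pose proof HnA as HnA0. unfold AA in HnA. apply not_all_ex_not in HnA. destruct HnA as [x Hx].
      apply imply_to_and in Hx. destruct Hx as [Wx Ix]. apply NNPP in Ix.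
      set (c := S (ecb k1 + ecb k2 + maxl L0 + x)).
      destruct (fin_list I c) as [H' HH'].
      destruct (upper_bound I HI (ev k1 :: H')) as [b [Ib Hb]]; [congruence| |].
      { intros y [E|Hy]; [subst; auto|apply HH' in Hy; tauto]. }
      destruct (common_stage (fun y s => BndP e (pair y b) s) H') with (N := S (es k1 + es k2)) as [s0 [Hs0 Hst0]].
      { intros; eapply BndP_mono; eauto. }
      { intros y Hy. apply R_Bnd. apply Hb. simpl; auto. }
      apply U_Bnd in Wx. destruct Wx as [sx Hsx].
      remember (s0 + sx) as s eqn:Hsdef.
      remember (mk (2 * b) s c H') as k' eqn:Hk'.
      assert (Ek : ev k' = b) by (rewrite Hk'; unfold ev; rewrite mk_em; apply Nat.div2_double).
      assert (Em : Nat.even (em k') = true) by (rewrite Hk'; rewrite mk_em; apply Nat.even_even).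
      assert (Top e u k').
      { unfold Top. rewrite Ek, Em. rewrite Hk'. rewrite mk_ecb, mk_eH, mk_es. split; [|split].
        - intros y Hy. split.
          + intros HB. apply HH'. split; auto. apply (Hlow b); auto. eapply Bnd_R; eauto.
          + intros z Hz HB. apply HH'. split; auto. apply HH' in Hz. apply (Hlow z); [|tauto]. eapply Bnd_R; eauto.
        - intros y Hy. eapply BndP_mono; [|apply Hst0; auto]. rewrite Hsdef; lia.
        - exists x. split; [apply HH'; split; auto; unfold c; lia|]. eapply BndP_mono; [|exact Hsx]. rewrite Hsdef; lia. }
      assert (HR: forall k, gI I k -> ecb k < c -> es k < s -> (forall y, In y (ev k :: eH k) -> y < c) -> Rel e u k k').
      { intros k (Ik & Hk & Ak) Hc Hsk Hlt. unfold Rel. split; [intros E; exfalso; exact (HnA0 (Ak E))|]. split.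
        { rewrite Hk'. rewrite mk_es. auto. } split. { rewrite Hk'. rewrite mk_ecb. auto. }
        split. { rewrite Hk'. rewrite mk_eH. apply HH'. split; auto. apply Hlt. simpl; auto. }
        split; auto. rewrite Hk'. rewrite mk_eH. intros y Hy. apply HH'. split; auto. apply Hlt. simpl; auto. }
      exists k'. split; [|split].
      * unfold gI. rewrite Ek, Em. split; auto. split; [|discriminate]. rewrite Hk'. rewrite mk_eH. intros y Hy. apply HH' in Hy. tauto.
      * apply HR; [split; auto|unfold c; lia|rewrite Hsdef; lia|].
        intros y Hy. assert (y <= maxl L0); [|unfold c; lia]. apply maxl_ge.
        destruct Hy as [E|Hy]; [subst; simpl; auto|]. right. right. apply in_or_app. auto.
      * apply HR; [split; auto|unfold c; lia|rewrite Hsdef; lia|].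
        intros y Hy. assert (y <= maxl L0); [|unfold c; lia]. apply maxl_ge.
        destruct Hy as [E|Hy]; [subst; simpl; auto|]. right. right. apply in_or_app. auto.
Qed.

Definition pi (J : nat -> Prop) (n : nat) := exists k, J k /\ ev k = n.

Definition el0 y := mk (2 * y) 0 0 [].
Lemma el0_ev y : ev (el0 y) = y. Proof. unfold el0, ev. rewrite mk_em. apply Nat.div2_double. Qed.
Lemma el0_em y : Nat.even (em (el0 y)) = true. Proof. unfold el0. rewrite mk_em. apply Nat.even_even. Qed.
Lemma el0_Rel y k : Top e u k -> 0 < es k -> 0 < ecb k -> In y (eH k) -> Rel e u (el0 y) k.
Proof.
  intros T H1 H2 H3. unfold Rel, el0. rewrite mk_em, mk_es, mk_ecb, mk_eH.
  rewrite <- (el0_ev y) in H3. unfold el0 in H3.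
  split; [rewrite Nat.even_even; discriminate|]. split; auto. split; auto. split; auto. split; auto.
  intros z [].
Qed.

Section Ideal.
Variable J : nat -> Prop.
Hypothesis HJ : is_ideal (Rel e u) J.

Lemma J1 k : J k -> exists k', J k' /\ Rel e u k k'.
Proof. intros Hk. destruct HJ as [_ [_ Hd]]. destruct (Hd k k Hk Hk) as [c [Hc [H1 _]]]. eauto. Qed.

Lemma J3 k : J k -> forall N, exists k', J k' /\ Rel e u k k' /\ N <= es k' /\ N <= ecb k'.
Proof.
  intros Hk. induction N.
  - destruct (J1 k Hk) as [k' [H1 H2]]. exists k'. split; [auto|split; [auto|lia]].
  - destruct IHN as [k' [H1 [H2 [H3 H4]]]]. destruct (J1 k' H1) as [k'' [H5 H6]].
    exists k''. pose proof H6 as (_ & A & B & _). split; [auto|split; [eapply Rel_trans; eauto|lia]].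
Qed.

Lemma J4 L : L <> [] -> (forall k, In k L -> J k) -> exists k', J k' /\ forall k, In k L -> Rel e u k k'.
Proof.
  destruct HJ as [_ [Hlow Hd]].
  induction L as [|a L IH]; [congruence|]. intros _ HL.
  destruct L as [|a' L'].
  - destruct (J1 a) as [k' [H1 H2]]; [apply HL; simpl; auto|]. exists k'. split; auto. intros k [E|[]]; subst; auto.
  - destruct IH as [b [Jb Hb]]; [congruence|intros; apply HL; simpl; auto|].
    destruct (Hd a b) as [c [Jc [Hac Hbc]]]; [apply HL; simpl; auto|auto|].
    exists c. split; auto. intros k [E|Hk]; [subst; auto|]. eapply Rel_trans; [apply Hb; auto|auto].
Qed.

Lemma Rel_top k k' : Rel e u k k' -> Top e u k'.
Proof. intros (_ & _ & _ & _ & _ & T). exact T. Qed.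

Lemma pi_low y a : R y a -> pi J a -> pi J y.
Proof.
  intros Hya [k [Jk Ek]]. apply R_Bnd in Hya. destruct Hya as [r Hr].
  destruct (J3 k Jk (S (r + y))) as [k' [Jk' [Hkk' [H1 H2]]]].
  pose proof Hkk' as (_ & _ & _ & Hin & _ & T).
  assert (Hy : In y (eH k')).
  { destruct T as [Cl _]. destruct (Cl y ltac:(lia)) as [_ Cl2]. apply (Cl2 a); [subst; auto|].
    eapply BndP_mono; [|exact Hr]. lia. }
  exists (el0 y). split; [|apply el0_ev].
  destruct HJ as [_ [Hlow _]]. apply (Hlow k'); auto. apply el0_Rel; auto; lia.
Qed.

Lemma J_H k : J k -> forall y, In y (eH k) -> pi J y.
Proof.
  intros Jk y Hy. destruct (J1 k Jk) as [k' [Jk' Hkk']].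
  pose proof Hkk' as (_ & _ & _ & _ & Hincl & (_ & Cert & _)).
  apply (pi_low y (ev k')); [eapply Bnd_R; apply Cert; auto|]. exists k'. auto.
Qed.

Lemma pi_ideal : is_ideal R (pi J).
Proof.
  pose proof HJ as [[k0 Jk0] [Hlow Hd]]. split; [|split].
  - exists (ev k0). exists k0. auto.
  - intros a b Hba Ha. eapply pi_low; eauto.
  - intros a b [ka [Ja Ea]] [kb [Jb Eb]]. destruct (Hd ka kb Ja Jb) as [c [Jc [H1 H2]]].
    exists (ev c). split; [exists c; auto|].
    pose proof H1 as (_ & _ & _ & I1 & _ & (_ & Cert1 & _)).
    pose proof H2 as (_ & _ & _ & I2 & _ & _).
    split; subst; eapply Bnd_R; apply Cert1; auto.
Qed.

Lemma J_type : (exists k, J k /\ Nat.even (em k) = false) <-> AA (pi J).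
Proof.
  pose proof HJ as [[k0 Jk0] [Hlow Hd]]. split.
  - intros [k [Jk Ek]] x Wx [kx [Jkx Ex]].
    destruct (Hd k kx Jk Jkx) as [k' [Jk' [H1 H2]]].
    pose proof H1 as (T1 & _). pose proof H2 as (_ & _ & _ & Ix & _).
    apply U_Bnd in Wx. destruct Wx as [r Hr].
    destruct (J3 k' Jk' r) as [k'' [Jk'' [H3 [H4 _]]]].
    pose proof H3 as (T3 & _ & _ & _ & Inc & (_ & _ & Chk)).
    rewrite (T3 (T1 Ek)) in Chk. apply (Chk x); [apply Inc; subst; auto|].
    eapply BndP_mono; [|exact Hr]. auto.
  - intros HA. destruct (J1 k0 Jk0) as [k' [Jk' Hk']]. exists k'. split; auto.
    destruct (Nat.even (em k')) eqn:E; auto. exfalso.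
    pose proof Hk' as (_ & _ & _ & _ & _ & (_ & _ & Chk)). rewrite E in Chk.
    destruct Chk as [y [Hy By]]. apply (HA y); [apply U_Bnd; eauto|]. eapply J_H; eauto.
Qed.

Lemma pick_list (L : list nat) : (forall y, In y L -> pi J y) ->
  exists Ks, (forall k, In k Ks -> J k) /\ forall y, In y L -> exists k, In k Ks /\ ev k = y.
Proof.
  induction L as [|a L IH]; intros H.
  - exists []. split; [intros k []|intros y []].
  - destruct IH as [Ks [H1 H2]]; [intros; apply H; simpl; auto|].
    destruct (H a) as [ka [Ja Ea]]; [simpl; auto|].
    exists (ka :: Ks). split; [intros k [E|Hk]; subst; auto|].
    intros y [E|Hy]; [subst; exists ka; simpl; auto|]. destruct (H2 y Hy) as [k [Hk Ek]]. exists k. simpl; auto.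
Qed.

Lemma J_eq k : J k <-> gI (pi J) k.
Proof.
  pose proof HJ as [[k0 Jk0] [Hlow Hd]]. split.
  - intros Jk. split; [exists k; auto|]. split; [apply J_H; auto|].
    intros E. apply J_type. eauto.
  - intros (Iv & IH & IA).
    destruct (pick_list (ev k :: eH k)) as [Ks [HKs1 HKs2]]; [intros y [E|Hy]; subst; auto|].
    assert (Hk1: exists k1, J k1 /\ (Nat.even (em k) = false -> Nat.even (em k1) = false)).
    { destruct (Nat.even (em k)) eqn:E.
      - exists k0. split; auto. discriminate.
      - destruct (proj2 J_type (IA eq_refl)) as [k1 [J1' E1]]. exists k1. auto. }
    destruct Hk1 as [k1 [Jk1 Ek1]].
    destruct (J4 (k1 :: Ks)) as [k' [Jk' Hk']]; [congruence|intros kk [E|Hkk]; subst; auto|].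
    destruct (J3 k' Jk' (S (es k + ecb k))) as [k'' [Jk'' [H1 [H2 H3]]]].
    apply (Hlow k'' k); auto.
    assert (Hin: forall y, In y (ev k :: eH k) -> In y (eH k'')).
    { intros y Hy. destruct (HKs2 y Hy) as [ky [Hky Eky]].
      assert (Rel e u ky k'') by (eapply Rel_trans; [apply Hk'; simpl; auto|exact H1]).
      destruct H as (_ & _ & _ & Iy & _). subst. auto. }
    split; [|split; [lia|split; [lia|split; [apply Hin; simpl; auto|split; [intros y Hy; apply Hin; simpl; auto|]]]]].
    + intros E. assert (Rel e u k1 k'') by (eapply Rel_trans; [apply Hk'; simpl; auto|exact H1]).
      destruct H as (T & _). auto.
    + eapply Rel_top; eauto.
Qed.
End Ideal.

Lemma pi_gI I : is_ideal R I -> forall n, pi (gI I) n <-> I n.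
Proof.
  intros HI n. split.
  - intros [k [(Ik & _ & _) Ek]]. subst. auto.
  - intros In0. exists (el0 n). split; [|apply el0_ev]. unfold gI. rewrite el0_ev, el0_em.
    split; auto. split; [unfold el0; rewrite mk_eH; intros y []|discriminate].
Qed.

End Topo.

Lemma is_ideal_ext (R1 R2 : nat -> nat -> Prop) (I : nat -> Prop) :
  (forall a b, R1 a b <-> R2 a b) -> is_ideal R1 I -> is_ideal R2 I.
Proof.
  intros H [A [B C]]. split; [auto|split].
  - intros a b Hb Ha. apply (B a b); auto. apply H; auto.
  - intros a b Ha Hb. destruct (C a b Ha Hb) as [c [Hc [H1 H2]]]. exists c. split; auto. split; apply H; auto.
Qed.

Theorem theorem4 :
  exists t : nat -> nat -> nat, computable2 t /\
    forall e u : nat, transitive (ce_rel e) ->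
      transitive (ce_rel (t e u)) /\
      comp_homeomorphic (ideal_base (ce_rel (t e u)))
        (add_open_base (ideal_base (ce_rel e))
           (fun I : ideals (ce_rel e) => forall x, W u x -> ~ proj1_sig I x)).
Proof.
  exists tfun. split; [apply tfun_computable|]. intros e u Htr.
  assert (Heq : forall a b, ce_rel (tfun e u) a b <-> Rel e u a b) by (intros; apply ce_rel_tfun).
  assert (Heq' : forall a b, Rel e u a b <-> ce_rel (tfun e u) a b) by (intros; symmetry; apply ce_rel_tfun).
  split.
  { intros a b c H1 H2. apply (proj2 (Heq a c)). apply (Rel_trans e u a b c); [apply (proj1 (Heq a b))|apply (proj1 (Heq b c))]; auto. }
  set (f := fun J : ideals (ce_rel (tfun e u)) =>
       exist (is_ideal (ce_rel e)) (pi (proj1_sig J))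
         (pi_ideal e u (proj1_sig J) (is_ideal_ext _ _ _ Heq (proj2_sig J)))).
  set (g := fun I : ideals (ce_rel e) =>
       exist (is_ideal (ce_rel (tfun e u))) (gI u (proj1_sig I))
         (is_ideal_ext _ _ _ Heq' (gI_ideal e u Htr (proj1_sig I) (proj2_sig I)))).
  exists f, g. split; [|split; [|split]].
  - intros [J HJ]. unfold f, g. simpl. apply subset_eq_compat.
    apply functional_extensionality. intros k. apply propositional_extensionality.
    symmetry. apply (J_eq e u). eapply is_ideal_ext; eauto.
  - intros [I HI]. unfold f, g. simpl. apply subset_eq_compat.
    apply functional_extensionality. intros n. apply propositional_extensionality.
    apply (pi_gI e u); auto.
  - exists eF. intros n [J HJ]. unfold add_open_base, ideal_base, f. simpl.
    assert (HJ' := is_ideal_ext _ _ _ Heq HJ).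
    setoid_rewrite W_eF. split.
    + intros H. exists (mk n 0 0 []). split; [rewrite mk_em; auto|].
      apply (J_eq e u J HJ'). unfold gI, ev. rewrite mk_em, mk_eH.
      destruct (Nat.even n) eqn:En.
      * split; auto. split; [intros y []|discriminate].
      * destruct H as [HA Hp]. split; auto. split; [intros y []|]. intros _. exact HA.
    + intros [k [En Jk]]. subst n.
      assert (Hp : pi J (Nat.div2 (em k))) by (exists k; auto).
      destruct (Nat.even (em k)) eqn:E; auto. split; auto.
      apply (J_type e u J HJ'). eauto.
  - exists (eG e). intros k [I HI]. unfold add_open_base, ideal_base, g. simpl.
    setoid_rewrite W_eG. split.
    + intros (Iv & IH & IA).
      destruct (upper_bound e Htr I HI (ev k :: eH k)) as [z [Iz Hz]]; [congruence|intros y [E|Hy]; subst; auto|].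
      destruct (common_stage (fun y s => BndP e (pair y z) s) (ev k :: eH k)) with (N := 0) as [t [_ Ht]].
      { intros; eapply BndP_mono; eauto. }
      { intros y Hy. apply BndP_W. apply Hz. auto. }
      destruct (Nat.even (em k)) eqn:E.
      * exists (2 * z). rewrite Nat.even_even, Nat.div2_double. split; [|auto].
        exists t. split; auto. split; [apply Ht; simpl; auto|]. intros y Hy. apply Ht. simpl; auto.
      * exists (2 * z + 1). rewrite Nat.even_odd, Nat.div2_odd'. split; [|split; auto].
        exists t. split; auto. split; [apply Ht; simpl; auto|]. intros y Hy. apply Ht. simpl; auto.
        apply IA. reflexivity.
    + intros [m [[t [Em [Hv HH]]] Hm]].
      pose proof HI as [_ [Hlow _]].
      assert (Iz : I (Nat.div2 m)) by (destruct (Nat.even m); [exact Hm|exact (proj2 Hm)]).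
      split; [|split].
      * apply (Hlow (Nat.div2 m)); auto. apply BndP_W. eauto.
      * intros y Hy. apply (Hlow (Nat.div2 m)); auto. apply BndP_W. eauto.
      * intros E. rewrite E in Em. rewrite Em in Hm. exact (proj1 Hm).
Qed.
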